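(* For every integer $n \geq 4$, the graph $G_n$ has chromatic number $n-2$ and is edge-critical, i.e., $\chi(G_n - e) < \chi(G_n)$ for every edge $e$ of $G_n$.
   Context: Let $[n]=\{1,\dots,n\}$. A $2$-subset $\{a,b\}$ of $[n]$ with $a<b$ is called stable if $b \neq a+1$ and $\{a,b\}\neq\{1,n\}$; it is written $ab$. For $n\ge 4$, the graph $G_n$ has as vertex set all stable $2$-subsets of $[n]$. Two vertices $ab$ ($a<b$) and $cd$ ($c<d$) with $a<c$ are adjacent in $G_n$ if and only if $\{a,b\}\cap\{c,d\}=\emptyset$ and one of the following holds: $a<c<b<d$ (a crossing pair), or $1<a<c<d<b$ (a transverse pair). $\chi$ denotes chromatic number. *)

(* Defs.v *)
From mathcomp Require Import all_boot.
Set Implicit Arguments. Unset Strict Implicit. Unset Printing Implicit Defensive.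

Definition colorable (T : finType) (e : rel T) (k : nat) : bool :=
  [exists f : {ffun T -> 'I_k}, [forall x, forall y, e x y ==> (f x != f y)]].

Lemma colorable_card (T : finType) (e : rel T) (irr : irreflexive e) :
  exists k, colorable e k.
Proof.
exists #|T|; apply/existsP; exists [ffun x => enum_rank x].
apply/forallP => x; apply/forallP => y; apply/implyP => exy.
rewrite !ffunE; apply/negP => /eqP/enum_rank_inj exy'.
by move: exy; rewrite exy' irr.
Qed.

Definition chi (T : finType) (e : rel T) (irr : irreflexive e) : nat :=
  ex_minn (colorable_card irr).

Definition del_edge (T : finType) (e : rel T) (u v : T) : rel T :=
  fun x y => e x y && ~~ (((x == u) && (y == v)) || ((x == v) && (y == u))).

Lemma del_edge_irr (T : finType) (e : rel T) (u v : T) :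
  irreflexive e -> irreflexive (del_edge e u v).
Proof. by move=> irr x; rewrite /del_edge irr. Qed.

(* Points of [n] = {1,..,n} are represented as elements a : 'I_n.+1 with 1 <= a. *)
(* A pair (a, b) is a stable 2-subset ab of [n] (with a < b). *)
Definition stable (n : nat) (p : 'I_n.+1 * 'I_n.+1) : bool :=
  let a := val p.1 in let b := val p.2 in
  [&& 1 <= a, a < b, b != a.+1 & ~~ ((a == 1) && (b == n))].

Definition Gvert (n : nat) : finType := {p : 'I_n.+1 * 'I_n.+1 | @stable n p}.

Definition adj_ord (n : nat) (x y : Gvert n) : bool :=
  let a := val (val x).1 in let b := val (val x).2 in
  let c := val (val y).1 in let d := val (val y).2 in
  [&& a < c,
      [&& a != c, a != d, b != c & b != d] &
      ((a < c < b) && (b < d)) || [&& 1 < a, a < c, c < d & d < b]].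

Definition Gadj (n : nat) : rel (Gvert n) := fun x y => adj_ord x y || adj_ord y x.

Lemma Gadj_irr (n : nat) : irreflexive (@Gadj n).
Proof. by move=> x; rewrite /Gadj /adj_ord ltnn. Qed.

(* Main.v *)
Require Import Defs.
From mathcomp Require Import zify.
From mathcomp Require Import all_boot.
Set Implicit Arguments. Unset Strict Implicit. Unset Printing Implicit Defensive.

Definition stabP (n a b : nat) : Prop :=
  1 <= a /\ a < b /\ b <= n /\ b <> a.+1 /\ ~ (a = 1 /\ b = n).
Definition adjP (a b c d : nat) : Prop :=
  a < c /\ a <> d /\ b <> c /\ b <> d /\ ((c < b /\ b < d) \/ (1 < a /\ c < d /\ d < b)).

Notation v1 x := (nat_of_ord (val x).1).
Notation v2 x := (nat_of_ord (val x).2).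

Lemma vstab n (x : Gvert n) : stabP n (v1 x) (v2 x).
Proof.
case: x => [[a b]] /=; rewrite /stable /= => h.
have := ltn_ord b; rewrite /stabP; lia.
Qed.

Lemma adjE n (x y : Gvert n) : adj_ord x y <-> adjP (v1 x) (v2 x) (v1 y) (v2 y).
Proof.
have := vstab x; have := vstab y.
rewrite /adj_ord /adjP /stabP /=; split; lia.
Qed.

Lemma vinj n (x y : Gvert n) : v1 x = v1 y -> v2 x = v2 y -> x = y.
Proof.
move=> h1 h2; apply: val_inj; move: h1 h2.
case: x => [[a b] ?]; case: y => [[c d] ?] /= h1 h2.
by rewrite (ord_inj h1) (ord_inj h2).
Qed.

Lemma mkV n a b : stabP n a b -> exists x : Gvert n, v1 x = a /\ v2 x = b.
Proof.
move=> h.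
have hs : stable (n:=n) (inord a, inord b).
  rewrite /stable /= !inordK; move: h; rewrite /stabP; lia.
exists (exist (@stable n) _ hs) => /=; rewrite !inordK; move: h; rewrite /stabP; lia.
Qed.

Lemma colorable_F n k (e : rel (Gvert n)) (F : nat -> nat -> nat) :
  (forall x : Gvert n, F (v1 x) (v2 x) < k) ->
  (forall x y, e x y -> F (v1 x) (v2 x) <> F (v1 y) (v2 y)) -> colorable e k.
Proof.
move=> hk hF; apply/existsP; exists [ffun x => Ordinal (hk x)].
apply/forallP => x; apply/forallP => y; apply/implyP => exy; rewrite !ffunE.
by apply/eqP => -[] /(hF x y exy).
Qed.

Lemma chi_le (T : finType) (e : rel T) (irr : irreflexive e) k :
  colorable e k -> chi irr <= k.
Proof. by rewrite /chi; case: ex_minnP => m _ h /h. Qed.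

Lemma chi_ge (T : finType) (e : rel T) (irr : irreflexive e) j :
  (forall k, colorable e k -> j <= k) -> j <= chi irr.
Proof. by rewrite /chi; case: ex_minnP => m hm _ /(_ m hm). Qed.

Definition Fup n a b :=
  if a <= n - 4 then a - 1 else if (a == n - 2) && (b == n) then n - 3 else n - 4.

Lemma Fup_lt n a b : 4 <= n -> stabP n a b -> Fup n a b < n - 2.
Proof. rewrite /Fup /stabP => *; repeat case: ifP; lia. Qed.

Lemma Fup_ne n a b c d : 4 <= n -> stabP n a b -> stabP n c d -> adjP a b c d ->
  Fup n a b <> Fup n c d.
Proof. rewrite /Fup /stabP /adjP => *; repeat case: ifP; lia. Qed.

Definition phi1 x := if x == 1 then 1 else x.+1.

Lemma lb n k F : 4 <= n -> (forall a b, stabP n a b -> F a b < k) ->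
  (forall a b c d, stabP n a b -> stabP n c d -> adjP a b c d -> F a b <> F c d) ->
  n - 2 <= k.
Proof.
elim: n k F => [|n IH] k F hn hk hF; first lia.
have hF' : forall a b c d, stabP n.+1 a b -> stabP n.+1 c d ->
    adjP a b c d \/ adjP c d a b -> F a b <> F c d.
  move=> a b c d h1 h2 [h|h]; first exact: hF.
  by move/esym; apply: hF.
case: (eqVneq n 3) => [en | hn3]; first subst n.
  have h13 : stabP 4 1 3 by rewrite /stabP; lia.
  have h24 : stabP 4 2 4 by rewrite /stabP; lia.
  have h := hF 1 3 2 4 h13 h24.
  have := hk 1 3 h13; have := hk 2 4 h24.
  have : adjP 1 3 2 4 by rewrite /adjP; lia.
  move/h; lia.
have hn4 : 4 <= n by lia.
set al := F 1 3.
pose G x y := let c := F (phi1 x) y.+1 in if c == al then F 2 y.+1 else c.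
pose G' x y := if al < G x y then (G x y).-1 else G x y.
have s13 : stabP n.+1 1 3 by rewrite /stabP; lia.
have sphi : forall x y, stabP n x y -> stabP n.+1 (phi1 x) y.+1.
  by move=> x y; rewrite /stabP /phi1; case: ifP; lia.
have spsi : forall x y, stabP n x y -> stabP n.+1 2 y.+1.
  by move=> x y; rewrite /stabP; lia.
have apsi : forall x y, stabP n x y -> adjP 1 3 2 y.+1.
  by move=> x y; rewrite /stabP /adjP; lia.
have aphi : forall x y z w, stabP n x y -> stabP n z w -> adjP x y z w ->
    adjP (phi1 x) y.+1 (phi1 z) w.+1.
  by move=> x y z w; rewrite /stabP /adjP /phi1; do 2 case: ifP; lia.
have apsi2 : forall x y z w, stabP n x y -> stabP n z w ->
    adjP x y z w \/ adjP z w x y ->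
    adjP 2 y.+1 (phi1 z) w.+1 \/ adjP (phi1 z) w.+1 2 y.+1.
  by move=> x y z w; rewrite /stabP /adjP /phi1; case: ifP; lia.
have Gne : forall x y, stabP n x y -> G x y <> al.
  move=> x y h; rewrite /G /=; case: eqP => // _.
  apply: hF'; [exact: spsi h| exact: s13 | right; exact: apsi h].
have Glt : forall x y, stabP n x y -> G x y < k.
  move=> x y h; rewrite /G /=; case: eqP => _; apply: hk; [exact: spsi h|exact: sphi h].
have Gadj : forall x y z w, stabP n x y -> stabP n z w -> adjP x y z w -> G x y <> G z w.
  move=> x y z w h1 h2 ha; rewrite /G /=.
  case: eqP => e1; case: eqP => e2.
  - exfalso; apply: (hF _ _ _ _ (sphi _ _ h1) (sphi _ _ h2) (aphi _ _ _ _ h1 h2 ha)).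
    by rewrite e1 e2.
  - apply: hF'; [exact: spsi h1 | exact: sphi h2 | exact: (apsi2 x y z w h1 h2 (or_introl ha))].
  - apply: hF'; [exact: sphi h1 | exact: spsi h2 | ].
    by case: (apsi2 z w x y h2 h1 (or_intror ha)) => ?; [right|left].
  - exact: hF (sphi _ _ h1) (sphi _ _ h2) (aphi _ _ _ _ h1 h2 ha).
have al_lt : al < k by apply: hk.
suff : n - 2 <= k.-1 by lia.
apply: (IH k.-1 G' hn4).
- move=> x y h; rewrite /G'; have := Gne x y h; have := Glt x y h; case: ifP; lia.
- move=> x y z w h1 h2 ha; rewrite /G'.
  have := Gne x y h1; have := Gne z w h2; have := Gadj x y z w h1 h2 ha.
  do 2 case: ifP; lia.
Qed.

Definition KF (inT : nat -> bool) (rk : nat -> nat) (sp1 : nat -> nat)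
  (sp2 : nat -> nat -> nat) (x y : nat) :=
  if x == 1 then (if inT y then sp1 y else rk y)
  else if ~~ inT x then rk x else if ~~ inT y then rk y else sp2 x y.

Definition special (inT : nat -> bool) (x y : nat) :=
  if x == 1 then inT y else inT x && inT y.

Lemma KF_cases inT rk sp1 sp2 x y :
  (exists k, ~~ inT k /\ ((x = 1 /\ k = y) \/ (x <> 1 /\ (k = x \/ k = y))) /\
      KF inT rk sp1 sp2 x y = rk k) \/
  (special inT x y /\ (KF inT rk sp1 sp2 x y = sp1 y \/ KF inT rk sp1 sp2 x y = sp2 x y)).
Proof.
rewrite /KF /special; case: eqP => ex.
  case iy: (inT y); first by right; split => //; left.
  by left; exists y; rewrite iy; split => //; split => //; left.
case ix: (inT x) => /=; last by left; exists x; rewrite ix; split => //; split => //; right; split => //; left.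
case iy: (inT y) => /=; last by left; exists y; rewrite iy; split => //; split => //; right; split => //; right.
by right; split => //; right.
Qed.

Lemma KF_ne n inT rk sp1 sp2 base x y z w :
  (forall s t, 2 <= s -> 2 <= t -> ~~ inT s -> ~~ inT t -> rk s = rk t -> s = t) ->
  (forall s, 2 <= s -> ~~ inT s -> s <= n -> rk s < base) ->
  (forall y, base <= sp1 y) -> (forall x y, base <= sp2 x y) ->
  stabP n x y -> stabP n z w -> adjP x y z w ->
  (special inT x y -> special inT z w ->
     KF inT rk sp1 sp2 x y <> KF inT rk sp1 sp2 z w) ->
  KF inT rk sp1 sp2 x y <> KF inT rk sp1 sp2 z w.
Proof.
move=> R1 R2 S1 S2 h1 h2 ha hs.
case: (KF_cases inT rk sp1 sp2 x y) => [[k [ik [hk ->]]]|[sx ex]];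
case: (KF_cases inT rk sp1 sp2 z w) => [[l [il [hl ->]]]|[sz ez]].
- have k2 : 2 <= k by move: h1 hk; rewrite /stabP; lia.
  have l2 : 2 <= l by move: h2 hl; rewrite /stabP; lia.
  move/(R1 _ _ k2 l2 ik il) => e; subst l; move: h1 h2 ha hk hl; rewrite /stabP /adjP; lia.
- have : rk k < base by apply: R2 => //; move: h1 hk; rewrite /stabP; lia.
  have := S1 w; have := S2 z w; lia.
- have : rk l < base by apply: R2 => //; move: h2 hl; rewrite /stabP; lia.
  have := S1 y; have := S2 x y; lia.
- exact: hs.
Qed.

(* ---- scheme A : edge (1,P) -- (C,D), 1 < C < P < D ---- *)
Definition rkA C P D s :=
  if s < C then s - 2 else if s < P then s - 3 else if s < D then s - 4 else s - 5.
Definition inA (C P D s : nat) := (s == C) || (s == P) || (s == D).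

Lemma FA_lt n P C D x y : 1 < C -> C < P -> P < D -> stabP n C D ->
  stabP n x y -> KF (inA C P D) (rkA C P D) (fun _ => n - 4) (fun _ _ => n - 4) x y < n - 3.
Proof. rewrite /KF /rkA /inA /stabP => *; repeat case: ifP; lia. Qed.

Ltac mem3 H := move: H => /orP [/orP [/eqP ? | /eqP ?] | /eqP ?]; subst.

Definition FA n P C D := KF (inA C P D) (rkA C P D) (fun _ => n - 4) (fun _ _ => n - 4).

Lemma FA_spec1 n P C D y z w : 1 < C -> C < P -> P < D ->
  stabP n 1 y -> stabP n z w -> adjP 1 y z w -> ~ (1 = 1 /\ y = P /\ z = C /\ w = D) ->
  inA C P D y -> inA C P D z -> inA C P D w -> False.
Proof.
move=> h0 h1 h2 hx hz ha hne s1 s2 s3.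
rewrite /inA in s1 s2 s3; mem3 s1; mem3 s2; mem3 s3.
all: move: hx hz ha hne; rewrite /stabP /adjP; lia.
Qed.

Lemma FA_spec2 n P C D x y z w : 1 < C -> C < P -> P < D ->
  stabP n x y -> stabP n z w -> adjP x y z w ->
  inA C P D x -> inA C P D y -> inA C P D z -> inA C P D w -> False.
Proof.
move=> h0 h1 h2 hx hz ha s0 s1 s2 s3.
rewrite /inA in s0 s1 s2 s3; mem3 s0; mem3 s1.
all: try (move: hx; rewrite /stabP; lia).
all: mem3 s2; mem3 s3.
all: move: hx hz ha; rewrite /stabP /adjP; lia.
Qed.

Lemma FA_ne n P C D x y z w : 1 < C -> C < P -> P < D -> stabP n C D ->
  stabP n x y -> stabP n z w -> adjP x y z w -> ~ (x = 1 /\ y = P /\ z = C /\ w = D) ->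
  KF (inA C P D) (rkA C P D) (fun _ => n - 4) (fun _ _ => n - 4) x y <>
  KF (inA C P D) (rkA C P D) (fun _ => n - 4) (fun _ _ => n - 4) z w.
Proof.
move=> h0 h1 h2 hCD hx hz ha hne.
apply: (KF_ne (n := n) (base := n - 4)) => //.
- by move=> s t s2 t2 ns nt e; move: ns nt e; rewrite /inA /rkA; repeat case: ifP; lia.
- by move=> s s2 ns sn; move: ns sn hCD; rewrite /inA /rkA /stabP; repeat case: ifP; lia.
- rewrite /special => s1 s2; exfalso.
  case: (eqVneq x 1) => [ex|x1]; case: (eqVneq z 1) => [ez|z1]; try subst x; try subst z.
  + by move: ha; rewrite /adjP; lia.
  + rewrite eqxx in s1; rewrite (negbTE z1) in s2; case/andP: s2 => s2 s3.
    exact: (FA_spec1 h0 h1 h2 hx hz ha hne).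
  + by move: ha hx; rewrite /adjP /stabP; lia.
  + rewrite (negbTE x1) in s1; rewrite (negbTE z1) in s2.
    case/andP: s1 => s1 s0; case/andP: s2 => s2 s3.
    exact: (FA_spec2 h0 h1 h2 hx hz ha).
Qed.


Ltac mem4 H := move: H => /orP [/orP [/orP [/eqP ? | /eqP ?] | /eqP ?] | /eqP ?]; subst.

(* ---- scheme B : edge (A,B) -- (C,D), 1 < A < C < B < D ---- *)
Definition rkB A B C D s :=
  if s < A then s - 2 else if s < C then s - 3 else if s < B then s - 4
  else if s < D then s - 5 else s - 6.
Definition inB (A B C D s : nat) := (s == A) || (s == B) || (s == C) || (s == D).
Definition FB n A B C D :=
  KF (inB A B C D) (rkB A B C D)
     (fun y => if (y == A) || (y == D) then n - 5 else n - 4)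
     (fun x y => if (x == C) && (y == B) then n - 4 else n - 5).

Lemma FB_spec1 n A B C D y z w : 1 < A -> A < C -> C < B -> B < D -> stabP n A B -> stabP n C D ->
  stabP n 1 y -> stabP n z w -> adjP 1 y z w -> inB A B C D y -> inB A B C D z -> inB A B C D w ->
  FB n A B C D 1 y <> FB n A B C D z w.
Proof.
move=> h0 h1 h2 h3 hAB hCD hx hz ha s1 s2 s3.
rewrite /inB in s1 s2 s3; mem4 s1; mem4 s2; mem4 s3.
all: try (exfalso; move: hx hz ha; rewrite /stabP /adjP; lia).
all: move: hAB hCD; rewrite /stabP /FB /KF /inB /=; repeat case: ifP; lia.
Qed.

Lemma FB_spec2 n A B C D x y z w : 1 < A -> A < C -> C < B -> B < D -> stabP n A B -> stabP n C D ->
  stabP n x y -> stabP n z w -> adjP x y z w -> ~ (x = A /\ y = B /\ z = C /\ w = D) ->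
  inB A B C D x -> inB A B C D y -> inB A B C D z -> inB A B C D w ->
  FB n A B C D x y <> FB n A B C D z w.
Proof.
move=> h0 h1 h2 h3 hAB hCD hx hz ha hne s0 s1 s2 s3.
rewrite /inB in s0 s1 s2 s3; mem4 s0; mem4 s1.
all: try (exfalso; move: hx; rewrite /stabP; lia).
all: mem4 s2; mem4 s3.
all: try (exfalso; move: hx hz ha hne; rewrite /stabP /adjP; lia).
all: move: hAB hCD; rewrite /stabP /FB /KF /inB /=; repeat case: ifP; lia.
Qed.

Lemma FB_lt n A B C D x y : 1 < A -> A < C -> C < B -> B < D -> stabP n C D ->
  stabP n x y -> FB n A B C D x y < n - 3.
Proof. rewrite /FB /KF /rkB /inB /stabP => *; repeat case: ifP; lia. Qed.

Lemma FB_ne n A B C D x y z w : 1 < A -> A < C -> C < B -> B < D ->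
  stabP n A B -> stabP n C D ->
  stabP n x y -> stabP n z w -> adjP x y z w -> ~ (x = A /\ y = B /\ z = C /\ w = D) ->
  FB n A B C D x y <> FB n A B C D z w.
Proof.
move=> h0 h1 h2 h3 hAB hCD hx hz ha hne.
apply: (KF_ne (n := n) (base := n - 5)) => //.
- by move=> s t s2 t2 ns nt e; move: ns nt e; rewrite /inB /rkB; repeat case: ifP; lia.
- by move=> s s2 ns sn; move: ns sn hCD; rewrite /inB /rkB /stabP; repeat case: ifP; lia.
- by move=> y'; case: ifP; lia.
- by move=> x' y'; case: ifP; lia.
- rewrite /special => s1 s2.
  change (FB n A B C D x y <> FB n A B C D z w).
  case: (eqVneq x 1) => [ex|x1]; case: (eqVneq z 1) => [ez|z1]; try subst x; try subst z.
  + by move: ha; rewrite /adjP; lia.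
  + rewrite eqxx in s1; rewrite (negbTE z1) in s2; case/andP: s2 => s2 s3.
    exact: FB_spec1.
  + by move: ha hx; rewrite /adjP /stabP; lia.
  + rewrite (negbTE x1) in s1; rewrite (negbTE z1) in s2.
    case/andP: s1 => s1 s0; case/andP: s2 => s2 s3.
    exact: FB_spec2.
Qed.

(* ---- scheme C : edge (A,B) -- (C,D), 1 < A < C < D < B (nested); colours shifted by 4 ---- *)
Definition FC4 (A B C D x y : nat) :=
  if x != 1 then
    if x < A then x + 2 else
    if B < y then y else
    if x == A then
      (if y == B then A + 2 else if y <= C then A + 2 else if y == D then A + 2
       else if D < y then y else B)
    else if x < C then
      (if D < y then (if y == B then x + 2 else y) else x + 2)
    else if x == C then
      (if y == D then A + 2 else if D < y then (if y == B then C + 2 else y) else C + 2)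
    else if D < y then
      (if y == B then (if D <= x then A + 2 else if x.+1 == D then C + 2 else x + 2)
       else y)
    else x + 2
  else
    if y < A then A + 1 else if B < y then B + 1 else if y == A then A + 2
    else if y == B then A + 2 else if y < C then C + 1 else if D < y then D + 1
    else if y == C then C + 2 else if D <= y.+1 then B else y + 2.

Lemma FC4_ne A B C D x y z w : 1 < A -> A < C -> C.+1 < D -> D < B ->
  1 <= x -> x.+1 < y -> 1 <= z -> z.+1 < w ->
  adjP x y z w -> ~ (x = A /\ y = B /\ z = C /\ w = D) ->
  FC4 A B C D x y <> FC4 A B C D z w.
Proof.
move=> h0 h1 h2 h3 hx hy hz hw ha hne.
rewrite /FC4.
repeat case: ifP; move: ha; rewrite /adjP; lia.
Qed.

Lemma FC4_bd n A B C D x y : 1 < A -> A < C -> C.+1 < D -> D < B -> B <= n ->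
  stabP n x y -> 4 <= FC4 A B C D x y <= n.
Proof. rewrite /FC4 /stabP => *; repeat case: ifP; lia. Qed.

Lemma FC_ok n A B C D : 1 < A -> A < C -> C.+1 < D -> D < B -> B <= n ->
  (forall x y, stabP n x y -> FC4 A B C D x y - 4 < n - 3) /\
  (forall x y z w, stabP n x y -> stabP n z w -> adjP x y z w ->
     ~ (x = A /\ y = B /\ z = C /\ w = D) ->
     FC4 A B C D x y - 4 <> FC4 A B C D z w - 4).
Proof.
move=> h0 h1 h2 h3 h4; split.
  by move=> x y hx; have := FC4_bd h0 h1 h2 h3 h4 hx; lia.
move=> x y z w hx hz ha hne.
have := FC4_bd h0 h1 h2 h3 h4 hx; have := FC4_bd h0 h1 h2 h3 h4 hz.
have := @FC4_ne A B C D x y z w h0 h1 h2 h3.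
move: hx hz; rewrite /stabP => hx hz.
have e1 : 1 <= x by lia. have e2 : x.+1 < y by lia.
have e3 : 1 <= z by lia. have e4 : z.+1 < w by lia.
move=> /(_ e1 e2 e3 e4 ha hne); lia.
Qed.

Lemma crit n a b c d : 4 <= n -> stabP n a b -> stabP n c d -> adjP a b c d ->
  exists F : nat -> nat -> nat,
    (forall x y, stabP n x y -> F x y < n - 3) /\
    (forall x y z w, stabP n x y -> stabP n z w -> adjP x y z w ->
       ~ (x = a /\ y = b /\ z = c /\ w = d) -> F x y <> F z w).
Proof.
move=> hn hab hcd had.
case: (eqVneq a 1) => [ea|na].
  subst a.
  have [h1 [h2 h3]] : 1 < c /\ c < b /\ b < d by move: had; rewrite /adjP; lia.
  exists (KF (inA c b d) (rkA c b d) (fun _ => n - 4) (fun _ _ => n - 4)); split.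
    by move=> x y hx; apply: FA_lt.
  by move=> x y z w hx hz hxz hne; apply: FA_ne.
case: (ltnP b d) => bd.
  have [h1 [h2 h3]] : 1 < a /\ a < c /\ c < b by move: had hab; rewrite /adjP /stabP; lia.
  exists (FB n a b c d); split.
    by move=> x y hx; apply: FB_lt.
  by move=> x y z w hx hz hxz hne; apply: FB_ne.
have [h1 [h2 [h3 [h4 h5]]]] : 1 < a /\ a < c /\ c.+1 < d /\ d < b /\ b <= n.
  by move: had hab hcd bd; rewrite /adjP /stabP; lia.
exists (fun x y => FC4 a b c d x y - 4).
exact: FC_ok.
Qed.

Lemma del_colorable n (u v : Gvert n) : 4 <= n -> Gadj u v ->
  colorable (del_edge (@Gadj n) u v) (n - 3).
Proof.
move=> hn huv.
have key : forall p q : Gvert n, adj_ord p q ->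
    (forall x y, del_edge (@Gadj n) u v x y -> ~ (x = p /\ y = q) /\ ~ (x = q /\ y = p)) ->
    colorable (del_edge (@Gadj n) u v) (n - 3).
  move=> p q /adjE hpq hex.
  have [F [hF1 hF2]] := crit hn (vstab p) (vstab q) hpq.
  apply: (colorable_F (F := F)) => [x|x y hxy]; first exact: hF1 (vstab x).
  have [n1 n2] := hex x y hxy.
  move: hxy; rewrite /del_edge /Gadj => /andP [/orP [/adjE h|/adjE h] _].
    apply: hF2 (vstab x) (vstab y) h _ => -[e1 [e2 [e3 e4]]].
    by apply: n1; split; apply: vinj.
  move=> e; apply: (hF2 _ _ _ _ (vstab y) (vstab x) h _ (esym e)) => -[e1 [e2 [e3 e4]]].
  by apply: n2; split; apply: vinj.
have hex : forall x y, del_edge (@Gadj n) u v x y -> ~ (x = u /\ y = v) /\ ~ (x = v /\ y = u).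
  move=> x y; rewrite /del_edge => /andP [_ hn']; split => -[ex ey]; subst x y;
  by move: hn'; rewrite !eqxx ?orbT.
move: huv; rewrite /Gadj => /orP [h|h].
  exact: key h hex.
apply: key h _ => x y /hex [n1 n2]; split => //.
Qed.

Theorem theorem1 (n : nat) (hn : 4 <= n) :
  chi (@Gadj_irr n) = n - 2 /\
  (forall u v : Gvert n, Gadj u v ->
     chi (del_edge_irr u v (@Gadj_irr n)) < chi (@Gadj_irr n)).
Proof.
have col_up : colorable (@Gadj n) (n - 2).
  apply: (colorable_F (F := Fup n)) => [x|x y].
    exact: Fup_lt hn (vstab x).
  rewrite /Gadj => /orP [/adjE h | /adjE h].
    exact: Fup_ne hn (vstab x) (vstab y) h.
  by move/esym; apply: Fup_ne hn (vstab y) (vstab x) h.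
have lbk : forall k, colorable (@Gadj n) k -> n - 2 <= k.
  move=> k /existsP [f /forallP hf].
  pose F a b := if [pick x : Gvert n | (v1 x == a) && (v2 x == b)] is Some x
                then nat_of_ord (f x) else 0.
  have FofV : forall x : Gvert n, F (v1 x) (v2 x) = f x.
    move=> x; rewrite /F; case: pickP => [x' /andP [/eqP h1 /eqP h2] | /(_ x)].
      by rewrite (vinj h1 h2).
    by rewrite !eqxx.
  apply: (lb (F := F) hn).
    move=> a b hab; have [x [<- <-]] := mkV hab.
    by rewrite FofV.
  move=> a b c d hab hcd had.
  have [x [ex1 ex2]] := mkV hab; have [y [ey1 ey2]] := mkV hcd.
  subst a b c d; rewrite !FofV => e.
  have hxy : Gadj x y by rewrite /Gadj (proj2 (adjE x y) had).
  have := implyP (forallP (hf x) y) hxy.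
  by rewrite (ord_inj e) eqxx.
have hchi : chi (@Gadj_irr n) = n - 2.
  by apply/eqP; rewrite eqn_leq (chi_le _ col_up) (chi_ge _ lbk).
split => // u v huv; rewrite hchi.
apply: (leq_ltn_trans (chi_le _ (del_colorable hn huv))); lia.
Qed.
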